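(* Let $q\ge 2$, $u\ge 1$, $Q\ge 2$, $n\ge1$, $N\ge 1$ be integers and let $0=\eta_0<\eta_1<\cdots<\eta_Q$ be integer thresholds with $\eta_Q>(q-1)u$ and $q-1\ge\eta_1$. If $\mathbf{C}_b$ is a binary $u$-disjunct matrix of size $n\times N$, then the columns of $(q-1)\mathbf{C}_b$ form a $[q;Q;\boldsymbol{\eta};u]$-SQ-disjunct code of length $n$ and size $N$, where $\boldsymbol{\eta}=(\eta_1,\dots,\eta_Q)$. Consequently, for all $n,N$, if a binary $u$-disjunct code of length $n$ and size $N$ exists, then a $[q;Q;\boldsymbol{\eta};u]$-SQ-disjunct code of length $n$ and size $N$ exists (so the rate $\frac{\log N}{n}$ of the best $[q;Q;\boldsymbol{\eta};u]$-SQ-disjunct code is at least that of the best binary $u$-disjunct code).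
   Context: A binary $n\times N$ matrix is $u$-disjunct if for every column $\mathbf{c}$ and every set $S$ of at most $u$ columns other than $\mathbf{c}$, there is a row in which $\mathbf{c}$ has entry $1$ and every column in $S$ has entry $0$; its columns form a binary $u$-disjunct code of length $n$ and size $N$. A $q$-ary code of length $n$ is a set of distinct vectors in $\{0,1,\dots,q-1\}^n$. For a nonempty set $\mathcal{X}=\{\mathbf{x}_1,\dots,\mathbf{x}_s\}$ of at most $u$ codewords, its syndrome is the vector $\mathbf{y}_{\mathcal{X}}\in\{0,\dots,Q-1\}^n$ whose $k$-th coordinate equals the unique $r\in\{0,\dots,Q-1\}$ with $\eta_r\le\sum_{j=1}^s x_{k,j}<\eta_{r+1}$, where $x_{k,j}$ is the $k$-th coordinate of $\mathbf{x}_j$. We write $\mathcal{X}\lhd\mathcal{Z}$ ($\mathcal{X}$ is included in $\mathcal{Z}$) if $(\mathbf{y}_{\mathcal{X}})_k\le(\mathbf{y}_{\mathcal{Z}})_k$ for all $k$. A code $\mathcal{C}$ is $[q;Q;\boldsymbol{\eta};u]$-SQ-disjunct if for all $1\le s,t\le u$ and all sets $\mathcal{X},\mathcal{Z}\subseteq\mathcal{C}$ with $|\mathcal{X}|=s$, $|\mathcal{Z}|=t$, $\mathcal{X}\lhd\mathcal{Z}$ implies $\mathcal{X}\subseteq\mathcal{Z}$. *)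

(* Defs.v *)
From mathcomp Require Import all_boot all_order all_algebra.
Set Implicit Arguments. Unset Strict Implicit. Unset Printing Implicit Defensive.

Definition disjunct (u n N : nat) (M : 'M[bool]_(n, N)) : Prop :=
  forall (c : 'I_N) (S : {set 'I_N}), #|S| <= u -> c \notin S ->
    exists k : 'I_n, M k c && [forall j in S, ~~ M k j].

Definition qary_code (q n N : nat) (c : 'I_N -> {ffun 'I_n -> nat}) : Prop :=
  injective c /\ (forall j k, c j k < q).

(* The unique r in {0,...,Q-1} with eta r <= s < eta (r+1) (0 if none). *)
Definition level (Q : nat) (eta : nat -> nat) (s : nat) : nat :=
  odflt 0 (omap val [pick r : 'I_Q | eta r <= s < eta r.+1]).

Definition syndrome (Q : nat) (eta : nat -> nat) (n N : nat)
  (c : 'I_N -> {ffun 'I_n -> nat}) (X : {set 'I_N}) (k : 'I_n) : nat :=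
  level Q eta (\sum_(j in X) c j k).

Definition included (Q : nat) (eta : nat -> nat) (n N : nat)
  (c : 'I_N -> {ffun 'I_n -> nat}) (X Z : {set 'I_N}) : Prop :=
  forall k : 'I_n, syndrome Q eta c X k <= syndrome Q eta c Z k.

(* [q;Q;eta;u]-SQ-disjunct (the q-arity is part of qary_code). Subsets of the
   code are indexed by subsets of 'I_N, as c is injective. *)
Definition sq_disjunct (Q : nat) (eta : nat -> nat) (u n N : nat)
  (c : 'I_N -> {ffun 'I_n -> nat}) : Prop :=
  forall X Z : {set 'I_N}, 1 <= #|X| <= u -> 1 <= #|Z| <= u ->
    included Q eta c X Z -> X \subset Z.

Definition scaled_cols (q n N : nat) (M : 'M[bool]_(n, N)) :
  'I_N -> {ffun 'I_n -> nat} :=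
  fun j => [ffun k => if M k j then q.-1 else 0].

(* Main.v *)
Require Import Defs.
From mathcomp Require Import all_boot all_order all_algebra.

Lemma eta_ge (Q : nat) (eta : nat -> nat) (heta_incr : forall i, i < Q -> eta i < eta i.+1) :
  forall i, i <= Q -> i <= eta i.
Proof.
elim=> [|i IH] hi //.
have := heta_incr i hi. have := IH (ltnW hi). move=> a b. exact: leq_ltn_trans a b.
Qed.

Lemma level_exists (Q : nat) (eta : nat -> nat) s :
  forall m, 1 <= m -> m <= Q -> eta 0 <= s -> s < eta m ->
  exists r : 'I_Q, eta r <= s < eta r.+1.
Proof.
elim=> [|m IH] // _ hm h0 hs.
case: m IH hm hs => [|m] IH hm hs.
  by exists (Ordinal hm); rewrite /= h0 hs.
case: (leqP (eta m.+1) s) => h.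
  by exists (Ordinal hm); rewrite /= h hs.
exact: IH (ltnW hm) h0 h.
Qed.

Lemma level0 (Q : nat) (eta : nat -> nat) (hQ : 2 <= Q) (heta0 : eta 0 = 0)
  (heta_incr : forall i, i < Q -> eta i < eta i.+1) : level Q eta 0 = 0.
Proof.
rewrite /level; case: pickP => [r /andP [r1 r2] | //] /=.
have h := @eta_ge Q eta heta_incr _ (ltnW (ltn_ord r)).
apply/eqP; rewrite -leqn0; exact: leq_trans h r1.
Qed.

Lemma levelpos (Q : nat) (eta : nat -> nat) (hQ : 2 <= Q) (heta0 : eta 0 = 0)
  (heta_incr : forall i, i < Q -> eta i < eta i.+1) s :
  eta 1 <= s -> s < eta Q -> 0 < level Q eta s.
Proof.
move=> h1 hs; rewrite /level; case: pickP => [r /andP [r1 r2] | nz] /=.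
  rewrite lt0n; apply/eqP => r0; move: r2; rewrite r0 => r2.
  by move: h1; rewrite leqNgt r2.
have h0 : eta 0 <= s by rewrite heta0.
have [r'' hr''] := @level_exists Q eta s Q (@ltnW 1 Q hQ) (leqnn Q) h0 hs.
by have := nz r''; rewrite hr''.
Qed.

Theorem proposition2 (q u Q : nat) (eta : nat -> nat)
  (hq : 2 <= q) (hu : 1 <= u) (hQ : 2 <= Q)
  (heta0 : eta 0 = 0) (heta_incr : forall i, i < Q -> eta i < eta i.+1)
  (hetaQ : (q - 1) * u < eta Q) (heta1 : eta 1 <= q - 1) :
  (forall (n N : nat) (M : 'M[bool]_(n, N)), 1 <= n -> 1 <= N ->
     disjunct u M ->
     qary_code q (scaled_cols q M) /\ sq_disjunct Q eta u (scaled_cols q M))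
  /\
  (forall n N : nat, 1 <= n -> 1 <= N ->
     (exists M : 'M[bool]_(n, N), disjunct u M) ->
     exists c : 'I_N -> {ffun 'I_n -> nat},
       qary_code q c /\ sq_disjunct Q eta u c).
Proof.
have H1 : forall (n N : nat) (M : 'M[bool]_(n, N)), 1 <= n -> 1 <= N ->
     disjunct u M ->
     qary_code q (scaled_cols q M) /\ sq_disjunct Q eta u (scaled_cols q M).
  move=> n N M _ _ hD; split; [split|].
  - move=> a b hab; apply/eqP; apply: contraT => nab.
    have c1 : #|[set b]| <= u by rewrite cards1.
    have c2 : a \notin [set b] by rewrite in_set1.
    have [k /andP [ha hb]] := hD a [set b] c1 c2.
    have {}hb : ~~ M k b := (forall_inP hb) b (set11 b).
    have := congr1 (fun f : {ffun 'I_n -> nat} => f k) hab.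
    have qpos : 0 < q.-1 by rewrite -subn1 subn_gt0.
    rewrite /scaled_cols !ffunE ha (negbTE hb) => e; by move: qpos; rewrite e.
  - move=> j k; rewrite /scaled_cols ffunE; case: (M k j) => //; [rewrite prednK //; exact: ltnW | exact: ltnW].
  - move=> X Z /andP [hX1 hXu] /andP [hZ1 hZu] hinc.
    apply/subsetP => x xX; apply/negPn/negP => xZ.
    have [k /andP [hk /forall_inP hZ]] := hD x Z hZu xZ.
    have := hinc k; rewrite /syndrome /level.
    have -> : \sum_(j in Z) scaled_cols q M j k = 0.
      by rewrite big1 // => j jZ; rewrite /scaled_cols ffunE (negbTE (hZ j jZ)).
    set s := \sum_(j in X) _.
    have slo : q - 1 <= s.
      rewrite /s (bigD1 x) //= /scaled_cols ffunE hk subn1; exact: leq_addr.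
    have shi : s <= (q - 1) * u.
      apply: (@leq_trans (\sum_(j in X) (q - 1))).
        by apply: leq_sum => j _; rewrite /scaled_cols ffunE; case: (M k j); rewrite ?subn1.
      by rewrite sum_nat_const mulnC leq_mul2l hXu orbT.
    rewrite -/(level Q eta s) -/(level Q eta 0).
    rewrite (@level0 Q eta hQ heta0 heta_incr) leqn0 => /eqP e.
    have := @levelpos Q eta hQ heta0 heta_incr s (leq_trans heta1 slo) (leq_ltn_trans shi hetaQ).
    by rewrite e.
split=> //.
move=> n N hn hN [M hM]; exists (scaled_cols q M); exact: H1.
Qed.
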